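(* Let $G$ be a graph with vertex set $[n]$. Then the set $\mathrm{FPF}(G)$ of $G$-friendship parking functions is non-empty if and only if $G$ contains a Hamiltonian path.
   Context: $[n]=\{1,\dots,n\}$. A parking preference is a vector $p=(p_1,\dots,p_n)\in[n]^n$; $p_i$ is the preferred spot of car $i$ in a one-way street with spots $1,\dots,n$. Friendship parking process for a graph $G$ on vertex set $[n]$: cars $1,\dots,n$ enter in this order, all spots initially unoccupied. A spot $k$ is available for car $i$ if it is unoccupied when car $i$ enters, and each of the neighbouring spots $k-1$ and $k+1$ is either unoccupied or occupied by a car $j$ that is adjacent to $i$ in $G$ (spots $0$ and $n+1$ are considered unoccupied). Car $i$ parks in the first spot $k\ge p_i$ that is available for it; if none exists, car $i$ fails to park. $p$ is a $G$-friendship parking function if all $n$ cars park; $\mathrm{FPF}(G)$ denotes the set of these. A Hamiltonian path of $G$ is a sequence of all $n$ distinct vertices $(v_1,\dots,v_n)$ with $\{v_k,v_{k+1}\}$ an edge of $G$ for all $k\in[n-1]$. *)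

(* Defs.v *)
From mathcomp Require Import all_boot.
Set Implicit Arguments. Unset Strict Implicit. Unset Printing Implicit Defensive.

(* Conventions: vertices/cars [n] are encoded as 'I_n (car i+1 <-> ordinal i);
   spots are natural numbers 1..n (spot 0 and n+1 always unoccupied).
   A parking preference p in [n]^n is a finite function p : {ffun 'I_n -> 'I_n},
   car (i+1) preferring spot (p i).+1. *)

Definition simple_graph n (G : rel 'I_n) : Prop :=
  irreflexive G /\ symmetric G.

Definition state n := nat -> option 'I_n.

Definition empty_state n : state n := fun _ => None.

Definition nbr_ok n (G : rel 'I_n) (s : state n) (c : 'I_n) (j : nat) : bool :=
  match s j with None => true | Some d => G c d end.

Definition available n (G : rel 'I_n) (s : state n) (c : 'I_n) (k : nat) : bool :=
  [&& 1 <= k <= n, s k == None, nbr_ok G s c k.-1 & nbr_ok G s c k.+1].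

(* Spot 0 must count as unoccupied for k = 1: states only ever occupy spots
   in 1..n, so s 0 = None; spot n+1 likewise. *)

Definition park_spot n (G : rel 'I_n) (s : state n) (c : 'I_n) (pref : nat)
  : option nat :=
  let cands := [seq k <- iota pref (n.+1 - pref) | available G s c k] in
  ohead cands.

Definition occupy n (s : state n) (k : nat) (c : 'I_n) : state n :=
  fun j => if j == k then Some c else s j.

Fixpoint run n (G : rel 'I_n) (p : {ffun 'I_n -> 'I_n}) (cars : seq 'I_n)
  (s : state n) : option (state n) :=
  match cars with
  | [::] => Some s
  | c :: cs =>
      match park_spot G s c (p c).+1 with
      | None => None
      | Some k => run G p cs (occupy s k c)
      end
  end.

Definition is_FPF n (G : rel 'I_n) (p : {ffun 'I_n -> 'I_n}) : bool :=
  isSome (run G p (enum 'I_n) (empty_state n)).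

Definition FPF n (G : rel 'I_n) : {set {ffun 'I_n -> 'I_n}} :=
  [set p | is_FPF G p].

Definition hamiltonian_path n (G : rel 'I_n) (s : seq 'I_n) : bool :=
  [&& uniq s, size s == n & sorted G s].

Definition has_hamiltonian_path n (G : rel 'I_n) : Prop :=
  exists s : seq 'I_n, hamiltonian_path G s.

(* Main.v *)
Require Import Defs.
From mathcomp Require Import all_boot.
Set Implicit Arguments. Unset Strict Implicit. Unset Printing Implicit Defensive.

Section S.
Variable n : nat.
Variable G : rel 'I_n.
Variable p : {ffun 'I_n -> 'I_n}.

Lemma park_spot_avail (s : state n) c pref k :
  park_spot G s c pref = Some k -> available G s c k.
Proof.
rewrite /park_spot.
case E: [seq _ <- _ | _] => [|x l] //= [<-].
have : x \in [seq k <- iota pref (n.+1 - pref) | available G s c k] by rewrite E inE eqxx.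
by rewrite mem_filter => /andP[].
Qed.

Lemma run_mono cs (s s' : state n) :
  run G p cs s = Some s' -> forall j d, s j = Some d -> s' j = Some d.
Proof.
elim: cs s => [|c cs IH] s /=; first by case=> ->.
case E: park_spot => [k|] // /IH H j d sj; apply: H.
rewrite /occupy; case: eqP => [jk|//]; subst j.
by move: (park_spot_avail E) => /and4P[_ /eqP skN _ _]; rewrite skN in sj.
Qed.

Lemma run_all cs (s s' : state n) :
  run G p cs s = Some s' -> forall d, d \in cs -> exists j, s' j = Some d.
Proof.
elim: cs s => [|c cs IH] s //=.
case E: park_spot => [k|] // R d; rewrite inE => /orP[/eqP ->|].
  by exists k; apply: (run_mono R); rewrite /occupy eqxx.
exact: IH R d.
Qed.

Definition inv (s : state n) :=
  (forall j d, s j = Some d -> 1 <= j <= n) /\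
  (forall j d e, s j = Some d -> s j.+1 = Some e -> G d e).

Lemma run_inv cs (s s' : state n) : symmetric G ->
  run G p cs s = Some s' -> inv s -> inv s'.
Proof.
move=> sym; elim: cs s => [|c cs IH] s /=; first by case=> <-.
case E: park_spot => [k|] // R [I1 I2]; apply: (IH _ R).
move: (park_spot_avail E) => /and4P[kn /eqP skN ok1 ok2].
rewrite /occupy; split.
  by move=> j d; case: eqP => [->//|_]; apply: I1.
move=> j d e; case: (eqVneq j k) => [->|jk].
  rewrite /= (gtn_eqF (ltnSn k)) => -[<-] sk; by move: ok2; rewrite /nbr_ok sk.
case: (eqVneq j.+1 k) => [jk'|jk'].
  by move=> sj [<-]; move: ok1; rewrite /nbr_ok -jk' /= sj sym.
exact: I2.
Qed.

Lemma path_pmap (s : state n) :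
  (forall j d e, s j = Some d -> s j.+1 = Some e -> G d e) ->
  forall l m d, s m = Some d -> (forall j, m < j <= m + l -> s j != None) ->
  path G d (pmap s (iota m.+1 l)).
Proof.
move=> I2; elim=> [|l IH] m d sm H //=.
case E: (s m.+1) => [e|]; last by move: (H m.+1); rewrite E ltnSn addnS ltnS leq_addr => /(_ isT).
rewrite /= (I2 _ _ _ sm E) /=; apply: IH E _ => j /andP[h1 h2]; apply: H.
by rewrite (ltn_trans _ h1) //= -addSnnS.
Qed.

Lemma sorted_pmap (s : state n) N :
  (forall j d e, s j = Some d -> s j.+1 = Some e -> G d e) ->
  (forall j, 0 < j <= N -> s j != None) -> sorted G (pmap s (iota 1 N)).
Proof.
move=> I2 allS; case: N allS => [|m] allS //=.
case E: (s 1) => [d|]; last by move: (allS 1); rewrite E => /(_ isT).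
by apply: (path_pmap I2 E) => j /andP[h1 h2]; apply: allS; rewrite (leq_trans _ h1).
Qed.

End S.

Section B.
Variable n : nat.
Variable G : rel 'I_n.
Variable sq : seq 'I_n.
Hypothesis sym : symmetric G.
Hypothesis memsq : forall c, c \in sq.
Hypothesis szsq : size sq = n.
Hypothesis srt : sorted G sq.

Definition pB : {ffun 'I_n -> 'I_n} := [ffun c => insubd c (index c sq)].

Lemma adj x a b i : i.+1 < n -> nth x sq i = a -> nth x sq i.+1 = b -> G a b.
Proof. move=> hi h1 h2; move/(sortedP x): srt => H; have := H i; rewrite h1 h2 szsq; exact. Qed.

Lemma run_some rest (s : state n) : uniq rest ->
  (forall j d, s j = Some d -> [/\ 0 < j <= n, index d sq = j.-1 & d \notin rest]) ->
  isSome (run G pB rest s).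
Proof.
elim: rest s => [|c cs IH] s //= /andP[cn ucs] Inv.
have icn : index c sq < n by rewrite -[X in _ < X]szsq index_mem.
have pc : (pB c).+1 = (index c sq).+1 by rewrite ffunE val_insubd icn.
set k := (index c sq).+1.
have av : available G s c k.
  rewrite /available /k icn /=; apply/and3P; split.
  - case E: (s _) => [d|] //; case: (Inv _ _ E) => _ /= hd.
    have -> : d = c by rewrite -(nth_index c (memsq d)) hd nth_index.
    by rewrite inE eqxx.
  - rewrite /nbr_ok /=; case E: (s _) => [d|] //; case: (Inv _ _ E) => /andP[h0 _] hd _.
    rewrite sym; apply: (adj (x := c) (i := (index c sq).-1)).
    + by rewrite prednK.
    + by rewrite -hd nth_index.
    + by rewrite prednK // nth_index.
  - rewrite /nbr_ok /=; case E: (s _) => [d|] //; case: (Inv _ _ E) => /andP[_ h1] hd _.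
    rewrite /= in hd; apply: (adj (x := c) (i := index c sq)) => //.
    + by rewrite nth_index.
    + by rewrite -hd nth_index.
have -> : park_spot G s c (pB c).+1 = Some k.
  rewrite /park_spot pc -/k subSn; last by rewrite /k.
  by rewrite /= av.
apply: IH => // j d; rewrite /occupy; case: eqP => [-> [<-]|_ /Inv[h1 h2 h3]].
  by rewrite /k icn.
by split=> //; move: h3; rewrite inE negb_or => /andP[].
Qed.

End B.

Theorem proposition2p1 (n : nat) (G : rel 'I_n) :
  simple_graph G ->
  (FPF G != set0) <-> has_hamiltonian_path G.
Proof.
move=> [irr sym]; split.
  case/set0Pn=> p; rewrite inE /is_FPF.
  case R: run => [s|] // _.
  have [I1 I2] : inv G s by apply: (run_inv sym R); split=> j d.
  have Hall := run_all R.
  set sq := pmap s (iota 1 n).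
  have sub : {subset enum 'I_n <= sq}.
    move=> d /Hall [j sj]; rewrite mem_pmap; apply/mapP; exists j => //.
    by rewrite mem_iota add1n ltnS; apply: I1 sj.
  have szle : size sq <= n by rewrite size_pmap (leq_trans (count_size _ _)) ?size_iota.
  have uq : uniq sq by apply: (leq_size_uniq (enum_uniq _) sub); rewrite size_enum_ord.
  have sz : size sq = n.
    apply/eqP; rewrite eqn_leq szle /=.
    by rewrite -[X in X <= _](size_enum_ord n) uniq_leq_size // enum_uniq.
  have allS : forall j, 0 < j <= n -> s j != None.
    have : all (fun x => s x) (iota 1 n) by rewrite all_count size_iota -[X in _ == X]sz size_pmap.
    move/allP=> A j hj; have := A j; rewrite mem_iota add1n ltnS hj.
    by case: (s j) => // /(_ isT).
  exists sq; rewrite /hamiltonian_path uq sz eqxx /=.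
  exact: sorted_pmap.
case=> sq /and3P[uq /eqP sz srt].
have memsq : forall c, c \in sq.
  have hs : size (enum 'I_n) <= size sq by rewrite size_enum_ord sz.
  have [_ E] := uniq_min_size uq (fun x _ => mem_enum _ x) hs.
  by move=> c; rewrite E mem_enum.
apply/set0Pn; exists (pB sq); rewrite inE /is_FPF.
apply: (run_some sym memsq sz srt (enum_uniq 'I_n)) => j d.
by rewrite /empty_state.
Qed.
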